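(* As $s\to 1^+$ (real $s$), $$\lim_{s\to1^+}(s-1)\prod_{p\equiv 5 \pmod 8}\left(1-\frac{1}{p^s}\right)^{-4}=\frac{1}{2\ln(1+\sqrt2)}\prod_{p\equiv 5\pmod 8}\left(1-\frac{1}{p^2}\right)^{-2},$$ where the products are over primes $p\equiv 5\pmod 8$. *)

(* Defs.v *)
From Stdlib Require Import Reals ZArith Znumtheory.
From Coquelicot Require Import Coquelicot.
Open Scope R_scope.

Definition prime5mod8 (n : nat) : bool :=
  if prime_dec (Z.of_nat n) then Nat.eqb (n mod 8) 5 else false.

Fixpoint prod_p5 (f : nat -> R) (N : nat) : R :=
  match N with
  | O => 1
  | S n => prod_p5 f n * (if prime5mod8 n then f n else 1)
  end.

Definition euler_factor (s : R) (p : nat) : R :=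
  / (1 - Rpower (INR p) (- s)) ^ 4.

Definition const_factor (p : nat) : R :=
  / (1 - / (INR p) ^ 2) ^ 2.

(* Main.v *)
Require Import Defs.
From Stdlib Require Import Reals ZArith Znumtheory.
From Coquelicot Require Import Coquelicot.
From Stdlib Require Import Lia Lra ClassicalEpsilon.
Open Scope R_scope.

Lemma sum_n_m_shift (a : nat -> R) n j :
  sum_n_m a n (n + j) = sum_n (fun r => a (n + r)%nat) j.
Proof.
  induction j.
  - rewrite Nat.add_0_r, sum_n_n, sum_O. now rewrite Nat.add_0_r.
  - rewrite sum_Sn. rewrite <- IHj.
    replace (n + S j)%nat with (S (n + j)) by lia.
    rewrite (sum_n_m_Chasles _ n (n+j) (S (n+j))); try lia. rewrite sum_n_n. reflexivity.
Qed.

Lemma sum_block (h : nat -> R) (m : nat) K : (0 < m)%nat ->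
  sum_n h (m * K + (m - 1)) =
  sum_n (fun k => sum_n (fun r => h (m * k + r)%nat) (m - 1)) K.
Proof.
  intros Hm. induction K.
  - rewrite sum_O. replace (m*0 + (m-1))%nat with (m-1)%nat by lia.
    apply sum_n_ext. intros r. f_equal. lia.
  - rewrite sum_Sn. rewrite <- IHK.
    unfold sum_n at 1.
    rewrite (sum_n_m_Chasles _ 0 (m * K + (m - 1)) (m * S K + (m - 1))); try lia.
    replace (S (m * K + (m - 1))) with (m * S K)%nat by lia.
    replace (m * S K + (m - 1))%nat with (m * S K + (m - 1))%nat by lia.
    rewrite sum_n_m_shift. reflexivity.
Qed.

Lemma regroup (h : nat -> R) (m : nat) (l : R) : (0 < m)%nat ->
  is_series h l ->
  is_series (fun k => sum_n (fun r => h (m * k + r)%nat) (m - 1)) l.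
Proof.
  intros Hm H.
  assert (H' : is_lim_seq (sum_n h) l) by exact H.
  assert (H2 := is_lim_seq_subseq (sum_n h) l (fun K => (m * K + (m - 1))%nat)).
  unfold is_series.
  eapply filterlim_ext; [intros K; apply sum_block; exact Hm|].
  apply H2; [|exact H'].
  intros P [N HN]. exists N. intros n Hn. apply HN. nia.
Qed.

Definition isp (n : nat) : bool := if prime_dec (Z.of_nat n) then true else false.

Fixpoint prodP (f : nat -> R) (N : nat) : R :=
  match N with
  | O => 1
  | S n => prodP f n * (if isp n then f n else 1)
  end.

Definition smooth (N n : nat) : Prop :=
  forall q : nat, prime (Z.of_nat q) -> (Z.of_nat q | Z.of_nat n)%Z -> (q < N)%nat.

Definition fs (f : nat -> R) (N n : nat) : R :=
  if excluded_middle_informative (smooth N n) then f n else 0.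

Lemma prime_divisor_ex (n : nat) : (2 <= n)%nat ->
  exists q : nat, prime (Z.of_nat q) /\ (Z.of_nat q | Z.of_nat n)%Z.
Proof.
  induction n as [n IH] using lt_wf_ind. intros Hn.
  destruct (prime_dec (Z.of_nat n)) as [Hp|Hp].
  - exists n. split; [exact Hp| apply Z.divide_refl].
  - destruct (not_prime_divide (Z.of_nat n)) as [d [Hd1 Hd2]]; [lia|exact Hp|].
    destruct (IH (Z.to_nat d)) as [q [Hq1 Hq2]]; [lia|lia|].
    exists q. split; [exact Hq1|].
    eapply Z.divide_trans; [exact Hq2|]. rewrite Z2Nat.id; [exact Hd2|lia].
Qed.

Lemma prime_gt1 q : prime (Z.of_nat q) -> (2 <= q)%nat.
Proof. intros H. destruct H as [H _]. lia. Qed.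

Lemma smooth_0 n : smooth 0 n -> n = 1%nat.
Proof.
  intros H. destruct n as [|[|n]].
  - exfalso. assert (H2 := H 2%nat prime_2). simpl in H2.
    assert (2 < 0)%nat by (apply H2; exists 0%Z; reflexivity). lia.
  - reflexivity.
  - destruct (prime_divisor_ex (S (S n))) as [q [Hq1 Hq2]]; [lia|].
    specialize (H q Hq1 Hq2). lia.
Qed.

Lemma smooth_lt N n : (1 <= n)%nat -> (n < N)%nat -> smooth N n.
Proof.
  intros H1 H2 q Hq Hd. apply Z.divide_pos_le in Hd; lia.
Qed.

Lemma smooth_1 N : smooth N 1.
Proof.
  intros q Hq Hd. apply prime_gt1 in Hq. apply Z.divide_pos_le in Hd; lia.
Qed.

Lemma smooth_np N n : ~ prime (Z.of_nat N) -> (smooth (S N) n <-> smooth N n).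
Proof.
  intros HN. split; intros H q Hq Hd.
  - specialize (H q Hq Hd). destruct (Nat.eq_dec q N); [subst; contradiction|lia].
  - specialize (H q Hq Hd). lia.
Qed.

Lemma smooth_p_ndiv p n : prime (Z.of_nat p) -> ~ (Z.of_nat p | Z.of_nat n)%Z ->
  (smooth (S p) n <-> smooth p n).
Proof.
  intros Hp Hn. split; intros H q Hq Hd.
  - specialize (H q Hq Hd). destruct (Nat.eq_dec q p); [subst; contradiction|lia].
  - specialize (H q Hq Hd). lia.
Qed.

Lemma smooth_p_div p n : prime (Z.of_nat p) -> (Z.of_nat p | Z.of_nat n)%Z ->
  ~ smooth p n.
Proof. intros Hp Hn H. specialize (H p Hp Hn). lia. Qed.

Lemma smooth_pm p m : prime (Z.of_nat p) ->
  (smooth (S p) (p * m) <-> smooth (S p) m).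
Proof.
  intros Hp. split; intros H q Hq Hd.
  - apply H; [exact Hq|]. rewrite Nat2Z.inj_mul. apply Z.divide_mul_r. exact Hd.
  - rewrite Nat2Z.inj_mul in Hd. destruct (prime_mult _ Hq _ _ Hd) as [Hd'|Hd'].
    + assert (Z.of_nat q = Z.of_nat p) by (apply prime_div_prime; assumption). lia.
    + apply H; assumption.
Qed.

Definition EH (f g : nat -> R) : Prop :=
  (forall m n, f (m * n)%nat = f m * f n) /\ f 1%nat = 1 /\ f 0%nat = 0 /\
  (forall n, Rabs (f n) <= g n) /\ ex_series g /\
  (forall p, prime (Z.of_nat p) -> f p <> 1).

Lemma ex_series_dom (a g : nat -> R) : (forall n, Rabs (a n) <= g n) -> ex_series g -> ex_series a.
Proof. intros H Hg. apply (ex_series_le a g); [|exact Hg]. intros n. apply H. Qed.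

Lemma fs_dom f g N n : (forall n, Rabs (f n) <= g n) -> Rabs (fs f N n) <= g n.
Proof.
  intros H. unfold fs. destruct excluded_middle_informative; [apply H|].
  rewrite Rabs_R0. eapply Rle_trans; [apply Rabs_pos|apply H].
Qed.

Lemma sum_n_zero_tail (a : nat -> R) j : (forall r, (0 < r <= j)%nat -> a r = 0) -> sum_n a j = a 0%nat.
Proof.
  induction j; intros H.
  - apply sum_O.
  - rewrite sum_Sn, IHj; [|intros; apply H; lia]. rewrite (H (S j)); [|lia].
    unfold plus; simpl; ring.
Qed.

Lemma is_series_delta1 : is_series (fun n => if Nat.eqb n 1 then 1 else 0) 1.
Proof.
  unfold is_series. change (is_lim_seq (sum_n (fun n : nat => if Nat.eqb n 1 then 1 else 0)) 1).
  apply is_lim_seq_incr_1.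
  eapply is_lim_seq_ext; [|apply is_lim_seq_const].
  intros n. simpl. induction n.
  - rewrite sum_Sn, sum_O. simpl. unfold plus; simpl; ring.
  - rewrite sum_Sn, <- IHn. simpl. unfold plus; simpl; ring.
Qed.

Lemma S0 f g : EH f g -> Series (fs f 0) = 1.
Proof.
  intros [Hm [H1 [H0 _]]]. apply is_series_unique.
  eapply is_series_ext; [|apply is_series_delta1].
  intros n. unfold fs. destruct (Nat.eqb_spec n 1).
  - subst. destruct excluded_middle_informative as [_|Hs]; [auto|].
    exfalso; apply Hs; apply smooth_1.
  - destruct excluded_middle_informative as [Hs|_]; [|auto].
    apply smooth_0 in Hs. contradiction.
Qed.

Lemma Sstep f g N : EH f g ->
  Series (fs f (S N)) = Series (fs f N) * (if isp N then / (1 - f N) else 1).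
Proof.
  intros HE. pose proof HE as [Hm [H1 [H0 [Hd [Hg Hne]]]]].
  unfold isp. destruct (prime_dec (Z.of_nat N)) as [Hp|Hp].
  2:{ rewrite Rmult_1_r. apply Series_ext. intros n. unfold fs.
      destruct excluded_middle_informative as [a|a];
      destruct excluded_middle_informative as [b|b]; auto;
      exfalso; [apply b, (smooth_np N n Hp), a | apply a, (smooth_np N n Hp), b]. }
  set (A := fun n => if Zdivide_dec (Z.of_nat N) (Z.of_nat n) then fs f (S N) n else 0).
  assert (HA : forall n, fs f (S N) n = A n + fs f N n).
  { intros n. unfold A. destruct Zdivide_dec as [Hdv|Hdv].
    - unfold fs at 3. destruct excluded_middle_informative as [Hs|_]; [|ring].
      exfalso. exact (smooth_p_div N n Hp Hdv Hs).
    - unfold fs. destruct excluded_middle_informative as [a|a];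
      destruct excluded_middle_informative as [b|b]; try ring;
      exfalso; [apply b, (smooth_p_ndiv N n Hp Hdv), a | apply a, (smooth_p_ndiv N n Hp Hdv), b]. }
  assert (HAd : forall n, Rabs (A n) <= g n).
  { intros n. unfold A. destruct Zdivide_dec. apply fs_dom; exact Hd.
    rewrite Rabs_R0. eapply Rle_trans; [apply Rabs_pos|apply Hd]. }
  assert (HexA : ex_series A) by (eapply ex_series_dom; eauto).
  assert (Hex1 : ex_series (fs f N)) by (eapply ex_series_dom; [intros; apply fs_dom; exact Hd|exact Hg]).
  assert (Hex2 : ex_series (fs f (S N))) by (eapply ex_series_dom; [intros; apply fs_dom; exact Hd|exact Hg]).
  assert (E1 : Series (fs f (S N)) = Series A + Series (fs f N)).
  { rewrite <- Series_plus by assumption. apply Series_ext. exact HA. }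
  assert (HN : (0 < N)%nat) by (apply prime_gt1 in Hp; lia).
  assert (E2 : Series A = f N * Series (fs f (S N))).
  { rewrite <- Series_scal_l. symmetry. apply is_series_unique.
    eapply is_series_ext; [|apply (regroup A N (Series A) HN (Series_correct _ HexA))].
    intros k. simpl. rewrite sum_n_zero_tail.
    - rewrite Nat.add_0_r. unfold A. destruct Zdivide_dec as [_|Hn].
      + unfold fs. destruct excluded_middle_informative as [a|a];
        destruct excluded_middle_informative as [b|b].
        * apply Hm.
        * exfalso; apply b, (smooth_pm N k Hp), a.
        * exfalso; apply a, (smooth_pm N k Hp), b.
        * ring.
      + exfalso. apply Hn. rewrite Nat2Z.inj_mul. apply Z.divide_mul_l, Z.divide_refl.
    - intros r Hr. unfold A. destruct Zdivide_dec as [Hdv|]; [|reflexivity].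
      exfalso. rewrite Nat2Z.inj_add, Nat2Z.inj_mul in Hdv.
      apply Z.divide_add_cancel_r in Hdv; [|apply Z.divide_mul_l, Z.divide_refl].
      apply Z.divide_pos_le in Hdv; lia. }
  assert (Hf : 1 - f N <> 0) by (intros Hc; apply (Hne N Hp); lra).
  rewrite E2 in E1. field_simplify_eq; [|exact Hf]. lra.
Qed.

Lemma prodP_S f g N : EH f g -> prodP (fun p => / (1 - f p)) N = Series (fs f N).
Proof.
  intros HE. induction N.
  - simpl. symmetry. eapply S0; eauto.
  - simpl. rewrite IHN. symmetry. eapply Sstep; eauto.
Qed.

Lemma euler f g : EH f g ->
  is_lim_seq (fun N => prodP (fun p => / (1 - f p)) N) (Series f).
Proof.
  intros HE. pose proof HE as [Hm [H1 [H0 [Hd [Hg Hne]]]]].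
  eapply is_lim_seq_ext; [intros; symmetry; apply (prodP_S f g); exact HE|].
  set (T := fun N => Series (fun k => g (N + k)%nat)).
  assert (HT : is_lim_seq T 0).
  { apply is_lim_seq_incr_1.
    assert (E : forall N, T (S N) = Series g - sum_n g N).
    { intros N. unfold T. rewrite (Series_incr_n g (S N)); [|lia|exact Hg].
      rewrite sum_n_Reals. simpl. ring. }
    eapply is_lim_seq_ext; [intros; symmetry; apply E|].
    replace (Finite 0) with (Rbar_minus (Series g) (Series g)) by (simpl; f_equal; ring).
    apply is_lim_seq_minus'; [apply is_lim_seq_const|].
    apply (Series_correct _ Hg). }
  assert (Hb : forall N, Rabs (Series f - Series (fs f N)) <= T N).
  { intros N.
    assert (Hexf : ex_series f) by (eapply ex_series_dom; eauto).
    assert (Hex1 : ex_series (fs f N)) by (eapply ex_series_dom; [intros; apply fs_dom; exact Hd|exact Hg]).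
    set (b := fun n => if Nat.ltb n N then 0 else g n).
    assert (Hdiff : forall n, Rabs (f n - fs f N n) <= b n).
    { intros n. unfold b. destruct (Nat.ltb_spec n N).
      - destruct n.
        + unfold fs. rewrite H0. destruct excluded_middle_informative; rewrite Rminus_0_r, Rabs_R0 || (rewrite Rminus_0_r, Rabs_R0); lra.
        + unfold fs. destruct excluded_middle_informative as [|Hs].
          * rewrite Rminus_diag, Rabs_R0. lra.
          * exfalso; apply Hs, smooth_lt; lia.
      - unfold fs. destruct excluded_middle_informative.
        + rewrite Rminus_diag, Rabs_R0. eapply Rle_trans; [apply Rabs_pos|apply Hd].
        + rewrite Rminus_0_r. apply Hd. }
    assert (Hgpos : forall n, 0 <= g n) by (intros; eapply Rle_trans; [apply Rabs_pos|apply Hd]).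
    assert (Hexb : ex_series b).
    { eapply ex_series_dom; [|exact Hg]. intros n. unfold b. destruct Nat.ltb.
      rewrite Rabs_R0; auto. rewrite Rabs_pos_eq; auto. lra. }
    assert (Hexd : ex_series (fun n => Rabs (f n - fs f N n))).
    { eapply ex_series_dom; [|exact Hexb]. intros n. rewrite Rabs_Rabsolu. apply Hdiff. }
    rewrite <- Series_minus by assumption.
    eapply Rle_trans; [apply Series_Rabs; exact Hexd|].
    eapply Rle_trans; [apply (Series_le _ b); [|exact Hexb]|].
    { intros n. split; [apply Rabs_pos|apply Hdiff]. }
    unfold T. rewrite (Series_incr_n_aux b N).
    - right. apply Series_ext. intros k. unfold b. destruct (Nat.ltb_spec (N+k) N); [lia|auto].
    - intros k Hk. unfold b. destruct (Nat.ltb_spec k N); [auto|lia]. }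
  apply (is_lim_seq_le_le (fun N => Series f - T N) _ (fun N => Series f + T N)).
  - intros N. specialize (Hb N). apply Rabs_le_between' in Hb. lra.
  - replace (Finite (Series f)) with (Rbar_minus (Series f) 0) by (simpl; f_equal; ring).
    apply is_lim_seq_minus'; [apply is_lim_seq_const|exact HT].
  - replace (Finite (Series f)) with (Rbar_plus (Series f) 0) by (simpl; f_equal; ring).
    apply is_lim_seq_plus'; [apply is_lim_seq_const|exact HT].
Qed.

Lemma ln_le_m1 t : 0 < t -> ln t <= t - 1.
Proof. intros Ht. pose proof (exp_ineq1_le (ln t)). rewrite exp_ln in H; lra. Qed.

Lemma ln_ge_m1 t : 0 < t -> 1 - / t <= ln t.
Proof.
  intros Ht. pose proof (ln_le_m1 (/ t) (Rinv_0_lt_compat _ Ht)).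
  rewrite ln_Rinv in H; lra.
Qed.

Lemma Rpower_pos x y : 0 < Rpower x y.
Proof. apply exp_pos. Qed.

Lemma Rpower_m1 a y : 0 < a -> Rpower a (y - 1) = Rpower a y / a.
Proof.
  intros Ha. unfold Rminus. rewrite Rpower_plus, Rpower_Ropp, Rpower_1; auto.
Qed.

Lemma rp_diff a b u : 0 < a -> a < b -> 0 < u ->
  u * (b - a) * Rpower b (- u - 1) <= Rpower a (- u) - Rpower b (- u) <=
  u * (b - a) * Rpower a (- u - 1).
Proof.
  intros Ha Hab Hu.
  rewrite !Rpower_m1 by lra.
  set (D := ln b - ln a).
  assert (HD1 : D <= (b - a) / a).
  { unfold D. rewrite <- ln_div by lra. eapply Rle_trans; [apply ln_le_m1; apply Rdiv_lt_0_compat; lra|].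
    right. field. lra. }
  assert (HD2 : (b - a) / b <= D).
  { unfold D. rewrite <- ln_div by lra. eapply Rle_trans; [|apply ln_ge_m1; apply Rdiv_lt_0_compat; lra].
    right. field. lra. }
  assert (Eb : Rpower b (- u) = Rpower a (- u) * exp (- u * D)).
  { unfold Rpower, D. rewrite <- exp_plus. f_equal. ring. }
  assert (Ea : Rpower a (- u) = Rpower b (- u) * exp (u * D)).
  { unfold Rpower, D. rewrite <- exp_plus. f_equal. ring. }
  pose proof (exp_ineq1_le (- u * D)). pose proof (exp_ineq1_le (u * D)).
  pose proof (Rpower_pos a (-u)). pose proof (Rpower_pos b (-u)).
  split.
  - rewrite Ea. 
    assert (u * (b - a) / b <= u * D).
    { unfold Rdiv. rewrite Rmult_assoc. apply Rmult_le_compat_l; lra. }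
    replace (u * (b - a) * (Rpower b (- u) / b)) with (Rpower b (-u) * (u * (b - a) / b)) by (field; lra).
    replace (Rpower b (- u) * exp (u * D) - Rpower b (- u)) with (Rpower b (-u) * (exp (u * D) - 1)) by ring.
    apply Rmult_le_compat_l; lra.
  - rewrite Eb.
    assert (u * D <= u * (b - a) / a).
    { unfold Rdiv. rewrite Rmult_assoc. apply Rmult_le_compat_l; lra. }
    replace (u * (b - a) * (Rpower a (- u) / a)) with (Rpower a (-u) * (u * (b - a) / a)) by (field; lra).
    replace (Rpower a (- u) - Rpower a (- u) * exp (- u * D)) with (Rpower a (-u) * (1 - exp (- u * D))) by ring.
    apply Rmult_le_compat_l; lra.
Qed.

Lemma rp_anti a b s : 0 < a -> a <= b -> 0 <= s -> Rpower b (- s) <= Rpower a (- s).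
Proof.
  intros Ha Hab Hs. rewrite !Rpower_Ropp.
  apply Rinv_le_contravar; [apply Rpower_pos|]. apply Rle_Rpower_l; lra.
Qed.

Lemma Rpower_1l y : Rpower 1 y = 1.
Proof. unfold Rpower. rewrite ln_1, Rmult_0_r. apply exp_0. Qed.

Definition gz (s : R) (n : nat) : R := if Nat.eqb n 0 then 0 else Rpower (INR n) (- s).

Lemma gz_nonneg s n : 0 <= gz s n.
Proof. unfold gz. destruct Nat.eqb; [lra|left; apply Rpower_pos]. Qed.

Lemma sum_gz_bound s N : 1 < s -> sum_n (gz s) (S N) <= 1 + (1 - Rpower (INR (S N)) (1 - s)) / (s - 1).
Proof.
  intros Hs. induction N.
  - rewrite sum_Sn, sum_O. unfold gz; simpl. rewrite !Rpower_1l. unfold plus; simpl.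
    replace (1 - 1) with 0 by ring. unfold Rdiv; rewrite Rmult_0_l. lra.
  - rewrite sum_Sn. unfold plus; simpl.
    assert (Hg : gz s (S (S N)) <= (Rpower (INR (S N)) (1 - s) - Rpower (INR (S (S N))) (1 - s)) * / (s - 1)).
    { pose proof (rp_diff (INR (S N)) (INR (S (S N))) (s - 1)) as H.
      assert (0 < INR (S N)) by (apply lt_0_INR; lia).
      assert (INR (S N) < INR (S (S N))) by (apply lt_INR; lia).
      destruct H as [H _]; try lra.
      replace (- (s - 1) - 1) with (- s) in H by ring.
      replace (- (s - 1)) with (1 - s) in H by ring.
      replace (INR (S (S N)) - INR (S N)) with 1 in H by (rewrite (S_INR (S N)); ring).
      unfold gz. simpl Nat.eqb. cbv iota.
      apply Rmult_le_reg_l with (s - 1); [lra|].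
      replace ((s - 1) * ((Rpower (INR (S N)) (1 - s) - Rpower (INR (S (S N))) (1 - s)) * / (s - 1)))
        with (Rpower (INR (S N)) (1 - s) - Rpower (INR (S (S N))) (1 - s)) by (field; lra).
      lra. }
    unfold Rdiv in *. revert IHN Hg. simpl INR. intros. nra.
Qed.

Lemma ex_series_gz s : 1 < s -> ex_series (gz s).
Proof.
  intros Hs.
  destruct (ex_finite_lim_seq_incr (sum_n (gz s)) (1 + 1 / (s - 1))) as [l Hl].
  - intros n. rewrite sum_Sn. unfold plus; simpl. pose proof (gz_nonneg s (S n)). lra.
  - intros n. destruct n.
    + rewrite sum_O. unfold gz. simpl. assert (0 < 1 / (s-1)) by (apply Rdiv_lt_0_compat; lra). lra.
    + eapply Rle_trans; [apply sum_gz_bound; exact Hs|].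
      pose proof (Rpower_pos (INR (S n)) (1 - s)).
      apply Rplus_le_compat_l. unfold Rdiv. apply Rmult_le_compat_r; [left; apply Rinv_0_lt_compat; lra|lra].
  - exists l. exact Hl.
Qed.

Definition chi (a1 a3 a5 a7 : R) (n : nat) : R :=
  match (n mod 8)%nat with 1%nat => a1 | 3%nat => a3 | 5%nat => a5 | 7%nat => a7 | _ => 0 end.

Definition c0 := chi 1 1 1 1.
Definition c4 := chi 1 (-1) 1 (-1).
Definition c8 := chi 1 (-1) (-1) 1.
Definition cm8 := chi 1 1 (-1) (-1).

Ltac chimult :=
  intros m n; unfold c0, c4, c8, cm8, chi; rewrite Nat.mul_mod by lia;
  assert (Ha := Nat.mod_upper_bound m 8); assert (Hb := Nat.mod_upper_bound n 8);
  destruct (m mod 8)%nat as [|[|[|[|[|[|[|[|]]]]]]]]; try lia;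
  destruct (n mod 8)%nat as [|[|[|[|[|[|[|[|]]]]]]]]; try lia; simpl; ring.

Lemma c0_mult : forall m n, c0 (m * n) = c0 m * c0 n. Proof. chimult. Qed.
Lemma c4_mult : forall m n, c4 (m * n) = c4 m * c4 n. Proof. chimult. Qed.
Lemma c8_mult : forall m n, c8 (m * n) = c8 m * c8 n. Proof. chimult. Qed.
Lemma cm8_mult : forall m n, cm8 (m * n) = cm8 m * cm8 n. Proof. chimult. Qed.

Definition dterm (c : nat -> R) (s : R) (n : nat) : R := c n * Rpower (INR n) (- s).

Lemma EH_dterm c s : 1 < s -> (forall m n, c (m * n)%nat = c m * c n) -> c 1%nat = 1 -> c 0%nat = 0 ->
  (forall n, Rabs (c n) <= 1) -> EH (dterm c s) (gz s).
Proof.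
  intros Hs Hm H1 H0 Hb. unfold EH, dterm. repeat split.
  - intros m n. rewrite Hm. destruct m; [rewrite H0; ring|]. destruct n; [rewrite Nat.mul_0_r, H0; ring|].
    rewrite mult_INR. rewrite <- Rpower_mult_distr; [ring| |]; apply lt_0_INR; lia.
  - rewrite H1. simpl. rewrite Rpower_1l. ring.
  - rewrite H0. ring.
  - intros n. unfold gz. destruct (Nat.eqb_spec n 0).
    + subst. rewrite H0, Rmult_0_l, Rabs_R0. lra.
    + rewrite Rabs_mult, (Rabs_pos_eq (Rpower _ _)) by (left; apply Rpower_pos).
      rewrite <- (Rmult_1_l (Rpower _ _)) at 2. apply Rmult_le_compat_r; [left; apply Rpower_pos|apply Hb].
  - apply ex_series_gz; exact Hs.
  - intros p Hp Hc. apply prime_gt1 in Hp.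
    assert (Rabs (c p * Rpower (INR p) (- s)) < 1).
    { rewrite Rabs_mult, (Rabs_pos_eq (Rpower _ _)) by (left; apply Rpower_pos).
      apply Rle_lt_trans with (1 * Rpower (INR p) (-s)).
      apply Rmult_le_compat_r; [left; apply Rpower_pos|apply Hb].
      rewrite Rmult_1_l, Rpower_Ropp.
      assert (Hgt : 1 < Rpower (INR p) s).
      { rewrite <- (Rpower_O (INR p)) by (apply lt_0_INR; lia).
        apply Rpower_lt; [apply (lt_INR 1); lia|lra]. }
      apply Rmult_lt_reg_l with (Rpower (INR p) s); [lra|]. rewrite Rinv_r by lra. lra. }
    rewrite Hc, Rabs_R1 in H. lra.
Qed.

Ltac chibound := intros n; unfold c0, c4, c8, cm8, chi;
  destruct (n mod 8)%nat as [|[|[|[|[|[|[|[|]]]]]]]]; unfold Rabs; destruct Rcase_abs; lra.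

Lemma c0_b : forall n, Rabs (c0 n) <= 1. Proof. chibound. Qed.
Lemma c4_b : forall n, Rabs (c4 n) <= 1. Proof. chibound. Qed.
Lemma c8_b : forall n, Rabs (c8 n) <= 1. Proof. chibound. Qed.
Lemma cm8_b : forall n, Rabs (cm8 n) <= 1. Proof. chibound. Qed.

Definition Lser (c : nat -> R) (s : R) := Series (dterm c s).

Lemma euler_chi c s : 1 < s -> (forall m n, c (m * n)%nat = c m * c n) -> c 1%nat = 1 -> c 0%nat = 0 ->
  (forall n, Rabs (c n) <= 1) ->
  is_lim_seq (fun N => prodP (fun p => / (1 - dterm c s p)) N) (Lser c s).
Proof. intros. apply (euler _ (gz s)). apply EH_dterm; auto. Qed.

Lemma prodP_mult a b N : prodP (fun p => a p * b p) N = prodP a N * prodP b N.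
Proof. induction N; simpl; [ring|]. rewrite IHN. destruct isp; ring. Qed.

Lemma prodP_pow a k N : prodP (fun p => a p ^ k) N = prodP a N ^ k.
Proof. induction N; simpl; [rewrite pow1; ring|]. rewrite IHN. destruct isp; rewrite Rpow_mult_distr; try rewrite pow1; ring. Qed.

Lemma prodP_ext a b N : (forall p, isp p = true -> a p = b p) -> prodP a N = prodP b N.
Proof. intros H. induction N; simpl; auto. rewrite IHN. destruct isp eqn:E; auto. rewrite H; auto. Qed.

Lemma prodP_nonneg a N : (forall p, isp p = true -> 0 <= a p) -> 0 <= prodP a N.
Proof. intros H. induction N; simpl; [lra|]. destruct isp eqn:E; apply Rmult_le_pos; auto; lra. Qed.

Lemma prodP_le a b N : (forall p, isp p = true -> 0 <= a p <= b p) -> prodP a N <= prodP b N.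
Proof.
  intros H. induction N; simpl; [lra|]. destruct isp eqn:E; [|lra].
  apply Rmult_le_compat; auto. apply prodP_nonneg. intros; apply H; auto. apply H; auto. apply H; auto.
Qed.

Lemma prodP_incr a N : (forall p, isp p = true -> 1 <= a p) -> prodP a N <= prodP a (S N).
Proof.
  intros H. simpl. assert (0 <= prodP a N) by (apply prodP_nonneg; intros p Hp; specialize (H p Hp); lra).
  destruct isp eqn:E; [|lra]. specialize (H N E). nra.
Qed.

Lemma prod_p5_P f N : prod_p5 f N = prodP (fun p => if Nat.eqb (p mod 8) 5 then f p else 1) N.
Proof.
  induction N; simpl; auto. rewrite IHN. unfold prime5mod8, isp. destruct prime_dec; auto.
Qed.

Definition xp (s : R) (p : nat) := Rpower (INR p) (- s).

Lemma xp_bounds s p : 0 < s -> (2 <= p)%nat -> 0 < xp s p < 1.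
Proof.
  intros Hs Hp. unfold xp. split; [apply Rpower_pos|].
  rewrite Rpower_Ropp.
  assert (Hgt : 1 < Rpower (INR p) s).
  { rewrite <- (Rpower_O (INR p)) by (apply lt_0_INR; lia).
    apply Rpower_lt; [apply (lt_INR 1); lia|lra]. }
  apply Rmult_lt_reg_l with (Rpower (INR p) s); [lra|]. rewrite Rinv_r by lra. lra.
Qed.

Definition g2 (s : R) (p : nat) := / (1 - Rpower (INR p) (- (2 * s))) ^ 2.

Lemma xp2 s p : (1 <= p)%nat -> Rpower (INR p) (- (2 * s)) = xp s p * xp s p.
Proof. intros. unfold xp. rewrite <- Rpower_plus. f_equal. ring. Qed.

Definition Ech (c : nat -> R) s N := prodP (fun p => / (1 - dterm c s p)) N.

Lemma factor_id s p : 0 < s -> isp p = true ->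
  (if Nat.eqb (p mod 8) 5 then euler_factor s p else 1) * (/ (1 - dterm c8 s p) * / (1 - dterm cm8 s p))
  = (/ (1 - dterm c0 s p) * / (1 - dterm c4 s p)) * (if Nat.eqb (p mod 8) 5 then g2 s p else 1).
Proof.
  intros Hs Hp. unfold isp in Hp. destruct prime_dec as [Hpr|]; [|discriminate].
  apply prime_gt1 in Hpr.
  pose proof (xp_bounds s p Hs Hpr) as Hx.
  unfold euler_factor, g2, dterm. rewrite xp2 by lia. fold (xp s p).
  unfold c0, c4, c8, cm8, chi.
  assert (Ha := Nat.mod_upper_bound p 8).
  destruct (p mod 8)%nat as [|[|[|[|[|[|[|[|]]]]]]]]; try lia; simpl;
  field; repeat split; try nra.
Qed.

Lemma prod_identity s N : 0 < s ->
  prod_p5 (euler_factor s) N * (Ech c8 s N * Ech cm8 s N) = (Ech c0 s N * Ech c4 s N) * prod_p5 (g2 s) N.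
Proof.
  intros Hs. rewrite !prod_p5_P. unfold Ech. rewrite <- !prodP_mult.
  apply prodP_ext. intros p Hp. apply factor_id; auto.
Qed.

Lemma inv1m_ge1 y : 0 <= y < 1 -> 1 <= / (1 - y).
Proof.
  intros H. apply Rmult_le_reg_l with (1 - y); [lra|]. rewrite Rinv_r by lra. nra.
Qed.

Lemma c0_vals p : c0 p = 0 \/ c0 p = 1.
Proof. unfold c0, chi. destruct (p mod 8)%nat as [|[|[|[|[|[|[|[|]]]]]]]]; auto. Qed.

Lemma c0_5 p : Nat.eqb (p mod 8) 5 = true -> c0 p = 1.
Proof. intros H. apply Nat.eqb_eq in H. unfold c0, chi. rewrite H. reflexivity. Qed.

Lemma isp_ge2 p : isp p = true -> (2 <= p)%nat.
Proof. unfold isp. destruct prime_dec as [H|]; [|discriminate]. intros _. apply prime_gt1; auto. Qed.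

Lemma dc0_bounds s p : 0 < s -> isp p = true -> 0 <= dterm c0 s p < 1.
Proof.
  intros Hs Hp. pose proof (xp_bounds s p Hs (isp_ge2 p Hp)). unfold dterm. fold (xp s p).
  destruct (c0_vals p) as [E|E]; rewrite E; lra.
Qed.

Lemma Ech0_incr s N : 0 < s -> Ech c0 s N <= Ech c0 s (S N).
Proof. intros Hs. apply prodP_incr. intros p Hp. apply inv1m_ge1, dc0_bounds; auto. Qed.

Lemma Ech0_nonneg s N : 0 < s -> 0 <= Ech c0 s N.
Proof. intros Hs. apply prodP_nonneg. intros p Hp. pose proof (inv1m_ge1 _ (dc0_bounds s p Hs Hp)). lra. Qed.

Lemma Ech0_le s N : 1 < s -> Ech c0 s N <= Lser c0 s.
Proof.
  intros Hs. apply (is_lim_seq_incr_compare (Ech c0 s)).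
  - apply euler_chi; auto using c0_mult, c0_b.
  - intros n. apply Ech0_incr; lra.
Qed.

Lemma prod_p5_bound (f : nat -> R) k s N : 0 < s ->
  (forall p, isp p = true -> Nat.eqb (p mod 8) 5 = true -> f p = (/ (1 - xp s p)) ^ k) ->
  prod_p5 f N <= (Ech c0 s N) ^ k.
Proof.
  intros Hs Hf. rewrite prod_p5_P. unfold Ech. rewrite <- prodP_pow.
  apply prodP_le. intros p Hp. pose proof (inv1m_ge1 _ (dc0_bounds s p Hs Hp)).
  destruct (Nat.eqb (p mod 8) 5) eqn:E.
  - rewrite Hf by auto. unfold dterm. rewrite c0_5 by auto. fold (xp s p). rewrite Rmult_1_l.
    split; [|lra]. apply pow_le. pose proof (xp_bounds s p Hs (isp_ge2 p Hp)).
    left; apply Rinv_0_lt_compat; lra.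
  - split; [lra|]. apply pow_R1_Rle. lra.
Qed.

Lemma prod_p5_incr (f : nat -> R) N :
  (forall p, isp p = true -> Nat.eqb (p mod 8) 5 = true -> 1 <= f p) ->
  prod_p5 f N <= prod_p5 f (S N).
Proof.
  intros Hf. rewrite !prod_p5_P. apply prodP_incr. intros p Hp.
  destruct Nat.eqb eqn:E; [apply Hf; auto|lra].
Qed.

Lemma lim_p5 (f : nat -> R) k s : 1 < s ->
  (forall p, isp p = true -> Nat.eqb (p mod 8) 5 = true -> f p = (/ (1 - xp s p)) ^ k) ->
  is_lim_seq (prod_p5 f) (real (Lim_seq (prod_p5 f))).
Proof.
  intros Hs Hf.
  destruct (ex_finite_lim_seq_incr (prod_p5 f) ((Lser c0 s) ^ k)) as [l Hl].
  - intros n. apply prod_p5_incr. intros p Hp E. rewrite Hf by auto.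
    apply pow_R1_Rle, inv1m_ge1. pose proof (xp_bounds s p ltac:(lra) (isp_ge2 p Hp)). lra.
  - intros n. eapply Rle_trans; [apply (prod_p5_bound f k s); auto; lra|].
    apply pow_incr. split; [apply Ech0_nonneg; lra|apply Ech0_le; auto].
  - rewrite (is_lim_seq_unique _ _ Hl). exact Hl.
Qed.

Definition Fs (s : R) := real (Lim_seq (prod_p5 (euler_factor s))).
Definition P2 (s : R) := real (Lim_seq (prod_p5 (g2 s))).

Lemma Fs_lim s : 1 < s -> is_lim_seq (prod_p5 (euler_factor s)) (Fs s).
Proof.
  intros Hs. apply (lim_p5 _ 4 s Hs). intros p _ _. unfold euler_factor. fold (xp s p).
  rewrite pow_inv. reflexivity.
Qed.

Lemma P2_lim s : 1 <= s -> is_lim_seq (prod_p5 (g2 s)) (P2 s).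
Proof.
  intros Hs. apply (lim_p5 _ 2 (2 * s)); [lra|]. intros p _ _. unfold g2. fold (xp (2 * s) p).
  rewrite pow_inv. reflexivity.
Qed.

Lemma L_lim c s : 1 < s -> (forall m n, c (m * n)%nat = c m * c n) -> c 1%nat = 1 -> c 0%nat = 0 ->
  (forall n, Rabs (c n) <= 1) -> is_lim_seq (Ech c s) (Lser c s).
Proof. intros. apply euler_chi; auto. Qed.

Lemma main_identity s : 1 < s ->
  Fs s * (Lser c8 s * Lser cm8 s) = (Lser c0 s * Lser c4 s) * P2 s.
Proof.
  intros Hs.
  assert (H1 := is_lim_seq_mult' _ _ _ _ (Fs_lim s Hs)
     (is_lim_seq_mult' _ _ _ _ (L_lim c8 s Hs c8_mult eq_refl eq_refl c8_b)
                               (L_lim cm8 s Hs cm8_mult eq_refl eq_refl cm8_b))).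
  assert (H2 := is_lim_seq_mult' _ _ _ _
     (is_lim_seq_mult' _ _ _ _ (L_lim c0 s Hs c0_mult eq_refl eq_refl c0_b)
                               (L_lim c4 s Hs c4_mult eq_refl eq_refl c4_b)) (P2_lim s ltac:(lra))).
  eapply is_lim_seq_ext in H1; [|intros N; apply prod_identity; lra].
  apply is_lim_seq_unique in H1. apply is_lim_seq_unique in H2.
  rewrite H1 in H2. injection H2. auto.
Qed.

Lemma nat_unbounded r : exists n : nat, r < INR n.
Proof.
  destruct (archimed (Rabs r)) as [H1 _].
  assert (Hpos : (0 < up (Rabs r))%Z).
  { apply lt_IZR. pose proof (Rabs_pos r). simpl. lra. }
  exists (Z.to_nat (up (Rabs r))). rewrite INR_IZR_INZ, Z2Nat.id by lia.
  pose proof (Rle_abs r). lra.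
Qed.

Lemma lim_right_eps (f : R -> R) a l :
  (forall eps, 0 < eps -> exists delta, 0 < delta /\ forall s, a < s < a + delta -> Rabs (f s - l) < eps) ->
  filterlim f (at_right a) (locally l).
Proof.
  intros H. apply filterlim_locally. intros eps.
  destruct (H eps (cond_pos eps)) as [d [Hd Hs]].
  exists (mkposreal d Hd). intros y Hy Hay.
  change (Rabs (f y - l) < eps). apply Hs.
  change (Rabs (y - a) < d) in Hy. apply Rabs_def2 in Hy. lra.
Qed.

Lemma c0_even k : c0 (2 * k) = 0.
Proof.
  unfold c0, chi. rewrite <- Nat.mul_mod_idemp_r by lia.
  assert (Ha := Nat.mod_upper_bound k 8).
  destruct (k mod 8)%nat as [|[|[|[|[|[|[|[|]]]]]]]]; try lia; reflexivity.
Qed.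

Lemma c0_odd k : c0 (2 * k + 1) = 1.
Proof.
  unfold c0, chi. rewrite <- Nat.add_mod_idemp_l by lia. rewrite <- Nat.mul_mod_idemp_r by lia.
  assert (Ha := Nat.mod_upper_bound k 8).
  destruct (k mod 8)%nat as [|[|[|[|[|[|[|[|]]]]]]]]; try lia; reflexivity.
Qed.

Definition osum (s : R) (k : nat) := Rpower (INR (2 * k + 1)) (- s).

Lemma L0_odd s : 1 < s -> is_series (osum s) (Lser c0 s).
Proof.
  intros Hs.
  assert (Hex : ex_series (dterm c0 s)).
  { destruct (EH_dterm c0 s Hs c0_mult eq_refl eq_refl c0_b) as [_ [_ [_ [Hd [Hg _]]]]].
    eapply ex_series_dom; eauto. }
  eapply is_series_ext; [|apply (regroup _ 2 _ ltac:(lia) (Series_correct _ Hex))].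
  intros k. change (2-1)%nat with 1%nat. cbv beta. idtac. rewrite sum_Sn, sum_O.
  change (plus (dterm c0 s (2 * k + 0)) (dterm c0 s (2 * k + 1))) with (dterm c0 s (2 * k + 0) + dterm c0 s (2 * k + 1)).
  unfold dterm, osum. rewrite Nat.add_0_r, c0_even, c0_odd. rewrite Rmult_0_l, Rplus_0_l, Rmult_1_l; reflexivity.
Qed.

Lemma osum_tele s k : 1 < s ->
  2 * (s - 1) * osum s (S k) <= Rpower (INR (2 * k + 1)) (- (s - 1)) - Rpower (INR (2 * S k + 1)) (- (s - 1))
  <= 2 * (s - 1) * osum s k.
Proof.
  intros Hs. pose proof (rp_diff (INR (2 * k + 1)) (INR (2 * S k + 1)) (s - 1)) as H.
  assert (0 < INR (2 * k + 1)) by (apply lt_0_INR; lia).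
  assert (INR (2 * k + 1) < INR (2 * S k + 1)) by (apply lt_INR; lia).
  assert (E : INR (2 * S k + 1) - INR (2 * k + 1) = 2).
  { rewrite !plus_INR, !mult_INR, !S_INR. simpl. ring. }
  rewrite E in H. replace (- (s - 1) - 1) with (- s) in H by ring. unfold osum.
  lra.
Qed.

Lemma osum_lower s K : 1 < s ->
  1 - Rpower (INR (2 * K + 3)) (- (s - 1)) <= 2 * (s - 1) * sum_n (osum s) K.
Proof.
  intros Hs. induction K.
  - rewrite sum_O. pose proof (osum_tele s 0 Hs). simpl in H |- *.
    replace (INR 3) with (1 + 1 + 1) by (simpl; ring). rewrite Rpower_1l in H. 
    replace (1 + 1 + 1) with (1 + 1 + 1) by ring. simpl in H.
    revert H. replace (INR (2 * 1 + 1)) with (1 + 1 + 1) by (simpl; ring). intros. 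
    pose proof (Rpower_pos (1+1+1) (-(s-1))). pose proof (Rpower_pos 3 (-(s-1))). 
    unfold osum in *. simpl in *. lra.
  - rewrite sum_Sn.
    pose proof (osum_tele s (S K) Hs).
    replace (2 * S K + 1)%nat with (2 * K + 3)%nat in H by lia.
    replace (2 * S (S K) + 1)%nat with (2 * S K + 3)%nat in H by lia.
    change (@Hierarchy.plus R_AbelianMonoid (sum_n (osum s) K) (osum s (S K))) with (sum_n (osum s) K + osum s (S K)).
    nra.
Qed.

Lemma osum_upper s K : 1 < s ->
  2 * (s - 1) * sum_n (osum s) K <= 2 * (s - 1) + 1 - Rpower (INR (2 * K + 1)) (- (s - 1)).
Proof.
  intros Hs. induction K.
  - rewrite sum_O. unfold osum. simpl. rewrite !Rpower_1l. lra.
  - rewrite sum_Sn. pose proof (osum_tele s K Hs).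
    change (@Hierarchy.plus R_AbelianMonoid (sum_n (osum s) K) (osum s (S K))) with (sum_n (osum s) K + osum s (S K)).
    nra.
Qed.

Lemma Rpower_small u eps : 0 < u -> 0 < eps -> exists K : nat, Rpower (INR (2 * K + 3)) (- u) < eps.
Proof.
  intros Hu He. destruct (nat_unbounded (exp (/ (u * eps)))) as [K HK].
  exists K. set (x := INR (2 * K + 3)).
  assert (Hx : exp (/ (u * eps)) < x).
  { unfold x. rewrite plus_INR, mult_INR. simpl. pose proof (pos_INR K). lra. }
  assert (Hl : / (u * eps) < ln x).
  { rewrite <- (ln_exp (/ (u * eps))). apply ln_increasing; [apply exp_pos|exact Hx]. }
  rewrite Rpower_Ropp. unfold Rpower.
  pose proof (exp_ineq1_le (u * ln x)).
  assert (/ eps < u * ln x).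
  { apply Rmult_lt_compat_l with (r := u) in Hl; [|lra].
    replace (u * / (u * eps)) with (/ eps) in Hl by (field; lra). lra. }
  assert (0 < / eps) by (apply Rinv_0_lt_compat; lra).
  rewrite <- (Rinv_inv eps). apply Rinv_lt_contravar; [nra|lra].
Qed.

Lemma L0_bounds s : 1 < s -> 1 / 2 <= (s - 1) * Lser c0 s <= 1 / 2 + (s - 1).
Proof.
  intros Hs. pose proof (L0_odd s Hs) as HL.
  assert (HL' : is_lim_seq (sum_n (osum s)) (Lser c0 s)) by exact HL.
  assert (Hinc : forall n, sum_n (osum s) n <= sum_n (osum s) (S n)).
  { intros n. rewrite sum_Sn. change (@Hierarchy.plus R_AbelianMonoid (sum_n (osum s) n) (osum s (S n))) with (sum_n (osum s) n + osum s (S n)).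
    pose proof (Rpower_pos (INR (2 * S n + 1)) (- s)). unfold osum. lra. }
  split.
  - apply Rnot_lt_le. intros Hc.
    destruct (Rpower_small (s - 1) (1 - 2 * ((s - 1) * Lser c0 s))) as [K HK]; [lra|lra|].
    pose proof (osum_lower s K Hs). pose proof (is_lim_seq_incr_compare _ _ HL' Hinc K). nra.
  - assert (Hup : Rbar_le (Lser c0 s) ((2 * (s - 1) + 1) / (2 * (s - 1)))).
    { apply (is_lim_seq_le (sum_n (osum s)) (fun _ => (2 * (s - 1) + 1) / (2 * (s - 1))) _ _); [|exact HL'|apply is_lim_seq_const].
      intros n. pose proof (osum_upper s n Hs). pose proof (Rpower_pos (INR (2 * n + 1)) (- (s - 1))).
      apply Rmult_le_reg_l with (2 * (s - 1)); [lra|]. 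
      replace (2 * (s - 1) * ((2 * (s - 1) + 1) / (2 * (s - 1)))) with (2 * (s - 1) + 1) by (field; lra). lra. }
    simpl in Hup. apply Rmult_le_compat_l with (r := s - 1) in Hup; [|lra].
    replace ((s - 1) * ((2 * (s - 1) + 1) / (2 * (s - 1)))) with (1 / 2 + (s - 1)) in Hup by (field; lra). lra.
Qed.

Lemma L0_residue : filterlim (fun s => (s - 1) * Lser c0 s) (at_right 1) (locally (1 / 2)).
Proof.
  apply lim_right_eps. intros eps He. exists eps. split; [lra|]. intros s Hs.
  pose proof (L0_bounds s ltac:(lra)). apply Rabs_def1; lra.
Qed.

Lemma plus_R (a b : R) : plus a b = a + b.
Proof. reflexivity. Qed.

Definition blk (a1 a3 a5 a7 s : R) (k : nat) : R :=
  a1 * Rpower (INR (8 * k + 1)) (- s) + a3 * Rpower (INR (8 * k + 3)) (- s) +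
  a5 * Rpower (INR (8 * k + 5)) (- s) + a7 * Rpower (INR (8 * k + 7)) (- s).

Lemma mod8 k r : (r < 8)%nat -> ((8 * k + r) mod 8 = r)%nat.
Proof.
  intros H. rewrite Nat.add_comm, Nat.mul_comm, Nat.Div0.mod_add. apply Nat.mod_small; auto.
Qed.

Lemma chi_bound a1 a3 a5 a7 : Rabs a1 <= 1 -> Rabs a3 <= 1 -> Rabs a5 <= 1 -> Rabs a7 <= 1 ->
  forall n, Rabs (chi a1 a3 a5 a7 n) <= 1.
Proof.
  intros. unfold chi. destruct (n mod 8)%nat as [|[|[|[|[|[|[|[|]]]]]]]]; auto; rewrite Rabs_R0; lra.
Qed.

Lemma Lser_blk a1 a3 a5 a7 s : 1 < s -> Rabs a1 <= 1 -> Rabs a3 <= 1 -> Rabs a5 <= 1 -> Rabs a7 <= 1 ->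
  is_series (blk a1 a3 a5 a7 s) (Lser (chi a1 a3 a5 a7) s).
Proof.
  intros Hs H1 H3 H5 H7.
  assert (Hex : ex_series (dterm (chi a1 a3 a5 a7) s)).
  { apply (ex_series_dom _ (gz s)); [|apply ex_series_gz; auto].
    intros n. unfold dterm, gz. destruct (Nat.eqb_spec n 0).
    - subst. unfold chi. simpl. rewrite Rmult_0_l, Rabs_R0. lra.
    - rewrite Rabs_mult, (Rabs_pos_eq (Rpower _ _)) by (left; apply Rpower_pos).
      rewrite <- (Rmult_1_l (Rpower _ _)) at 2. apply Rmult_le_compat_r; [left; apply Rpower_pos|].
      apply chi_bound; auto. }
  eapply is_series_ext; [|apply (regroup _ 8 _ ltac:(lia) (Series_correct _ Hex))].
  intros k. change (8-1)%nat with 7%nat. cbv beta.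
  repeat rewrite sum_Sn. rewrite sum_O. rewrite !plus_R. unfold dterm, chi, blk.
  rewrite !mod8 by lia. simpl Nat.modulo.
  match goal with |- ?a = ?b => change (@eq R a b) end. unfold plus; simpl. ring.
Qed.

Lemma is_derive_mon m x : is_derive (fun y => y ^ (S m) / INR (S m)) x (x ^ m).
Proof.
  auto_derive; [trivial|].
  change (match m with 0%nat => 1 | S _ => INR m + 1 end) with (INR (S m)).
  field. apply not_0_INR. lia.
Qed.

Lemma tail_bound (a B : nat -> R) K : (forall k, Rabs (a k) <= B k) -> ex_series B ->
  Rabs (Series a - sum_n a K) <= Series B - sum_n B K.
Proof.
  intros Hd HB.
  assert (Hex : ex_series a) by (eapply ex_series_dom; eauto).
  rewrite (Series_incr_n a (S K)), (Series_incr_n B (S K)) by (auto; lia).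
  simpl pred. rewrite !sum_n_Reals.
  replace (sum_f_R0 a K + Series (fun k => a (S K + k)%nat) - sum_f_R0 a K) with (Series (fun k => a (S K + k)%nat)) by ring.
  replace (sum_f_R0 B K + Series (fun k => B (S K + k)%nat) - sum_f_R0 B K) with (Series (fun k => B (S K + k)%nat)) by ring.
  assert (HB' : ex_series (fun k => B (S K + k)%nat)) by (apply ex_series_incr_n; auto).
  assert (Ha' : ex_series (fun k => Rabs (a (S K + k)%nat))).
  { eapply ex_series_dom; [|exact HB']. intros n. rewrite Rabs_Rabsolu. apply Hd. }
  eapply Rle_trans; [apply Series_Rabs; exact Ha'|].
  apply Series_le; [|exact HB']. intros n. split; [apply Rabs_pos|apply Hd].
Qed.

Lemma blk_cont a1 a3 a5 a7 k x : continuous (fun s => blk a1 a3 a5 a7 s k) x.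
Proof.
  apply (ex_derive_continuous (K:=R_AbsRing) (V:=R_NormedModule)). unfold blk, Rpower. auto_derive. auto.
Qed.

Lemma sumblk_cont a1 a3 a5 a7 K x : continuous (fun s => sum_n (blk a1 a3 a5 a7 s) K) x.
Proof.
  apply (ex_derive_continuous (K:=R_AbsRing) (V:=R_NormedModule)).
  induction K.
  - apply (ex_derive_ext (fun s => blk a1 a3 a5 a7 s 0)); [intros; symmetry; apply sum_O|].
    unfold blk, Rpower. auto_derive. auto.
  - apply (ex_derive_ext (fun s => plus (sum_n (blk a1 a3 a5 a7 s) K) (blk a1 a3 a5 a7 s (S K)))); [intros; symmetry; apply sum_Sn|].
    apply (ex_derive_plus (K := R_AbsRing) (V := R_NormedModule)); [exact IHK|].
    unfold blk, Rpower. auto_derive. auto.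
Qed.

Definition Bb (k : nat) := 24 * gz 2 (S k).

Lemma ex_series_Bb : ex_series Bb.
Proof.
  destruct (proj1 (ex_series_incr_1 (gz 2)) (ex_series_gz 2 ltac:(lra))) as [l Hl].
  exists (24 * l). exact (is_series_scal_l 24 _ _ Hl).
Qed.

Lemma diff_bound k r s : 1 <= s <= 2 -> (1 < r)%nat ->
  0 <= Rpower (INR (8 * k + 1)) (- s) - Rpower (INR (8 * k + r)) (- s) <= 2 * INR (r - 1) * gz 2 (S k).
Proof.
  intros Hs Hr.
  pose proof (rp_diff (INR (8 * k + 1)) (INR (8 * k + r)) s) as H.
  assert (0 < INR (8 * k + 1)) by (apply lt_0_INR; lia).
  assert (INR (8 * k + 1) < INR (8 * k + r)) by (apply lt_INR; lia).
  destruct H as [H H']; try lra.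
  assert (E : INR (8 * k + r) - INR (8 * k + 1) = INR (r - 1)).
  { rewrite <- minus_INR by lia. f_equal. lia. }
  rewrite E in H, H'.
  pose proof (Rpower_pos (INR (8 * k + r)) (- s - 1)).
  pose proof (pos_INR (r - 1)).
  assert (Y : Rpower (INR (8 * k + 1)) (- s - 1) <= gz 2 (S k)).
  { unfold gz. simpl Nat.eqb. cbv iota.
    eapply Rle_trans; [apply (Rle_Rpower _ _ (-2))|].
    - apply (le_INR 1). lia.
    - lra.
    - apply rp_anti; [apply lt_0_INR; lia|apply le_INR; lia|lra]. }
  assert (0 <= s * INR (r - 1) * Rpower (INR (8 * k + r)) (- s - 1)) by (apply Rmult_le_pos; [apply Rmult_le_pos|]; lra).
  split; [lra|].
  eapply Rle_trans; [exact H'|].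
  pose proof (Rpower_pos (INR (8 * k + 1)) (- s - 1)). 
  apply Rmult_le_compat; try nra. 
Qed.

Lemma abs_le_b x y : Rabs x <= y -> - y <= x <= y.
Proof. unfold Rabs; destruct Rcase_abs; lra. Qed.

Lemma blk_bound a1 a3 a5 a7 s k : 1 <= s <= 2 -> a1 + a3 + a5 + a7 = 0 ->
  Rabs a3 <= 1 -> Rabs a5 <= 1 -> Rabs a7 <= 1 ->
  Rabs (blk a1 a3 a5 a7 s k) <= Bb k.
Proof.
  intros Hs Hsum H3 H5 H7.
  pose proof (diff_bound k 3 s Hs ltac:(lia)) as D3.
  pose proof (diff_bound k 5 s Hs ltac:(lia)) as D5.
  pose proof (diff_bound k 7 s Hs ltac:(lia)) as D7.
  replace (INR (3 - 1)) with 2 in D3 by (simpl; ring).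
  replace (INR (5 - 1)) with 4 in D5 by (simpl; ring).
  replace (INR (7 - 1)) with 6 in D7 by (simpl; ring).
  replace (blk a1 a3 a5 a7 s k) with
    (- (a3 * (Rpower (INR (8 * k + 1)) (- s) - Rpower (INR (8 * k + 3)) (- s))
      + a5 * (Rpower (INR (8 * k + 1)) (- s) - Rpower (INR (8 * k + 5)) (- s))
      + a7 * (Rpower (INR (8 * k + 1)) (- s) - Rpower (INR (8 * k + 7)) (- s)))).
  2:{ unfold blk. replace a1 with (- a3 - a5 - a7) by lra. ring. }
  set (X3 := Rpower (INR (8 * k + 1)) (- s) - Rpower (INR (8 * k + 3)) (- s)) in *.
  set (X5 := Rpower (INR (8 * k + 1)) (- s) - Rpower (INR (8 * k + 5)) (- s)) in *.
  set (X7 := Rpower (INR (8 * k + 1)) (- s) - Rpower (INR (8 * k + 7)) (- s)) in *.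
  apply abs_le_b in H3. apply abs_le_b in H5. apply abs_le_b in H7.
  assert (0 <= (1 + a3) * X3) by (apply Rmult_le_pos; [lra|]; lra).
  assert (0 <= (1 - a3) * X3) by (apply Rmult_le_pos; lra).
  assert (0 <= (1 + a5) * X5) by (apply Rmult_le_pos; lra).
  assert (0 <= (1 - a5) * X5) by (apply Rmult_le_pos; lra).
  assert (0 <= (1 + a7) * X7) by (apply Rmult_le_pos; lra).
  assert (0 <= (1 - a7) * X7) by (apply Rmult_le_pos; lra).
  unfold Bb. apply Rabs_le. split; lra.
Qed.

Lemma Lcont a1 a3 a5 a7 : a1 + a3 + a5 + a7 = 0 ->
  Rabs a3 <= 1 -> Rabs a5 <= 1 -> Rabs a7 <= 1 ->
  filterlim (fun s => Series (blk a1 a3 a5 a7 s)) (at_right 1) (locally (Series (blk a1 a3 a5 a7 1))).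
Proof.
  intros Hsum H3 H5 H7. apply lim_right_eps. intros eps He.
  assert (HT : is_lim_seq (fun K => Series Bb - sum_n Bb K) 0).
  { replace (Finite 0) with (Rbar_minus (Series Bb) (Series Bb)) by (simpl; f_equal; ring).
    apply is_lim_seq_minus'; [apply is_lim_seq_const|]. apply (Series_correct _ ex_series_Bb). }
  apply is_lim_seq_spec in HT. destruct (HT (mkposreal (eps / 3) ltac:(lra))) as [K HK].
  specialize (HK K (le_n K)). simpl in HK. rewrite Rminus_0_r in HK.
  pose proof (sumblk_cont a1 a3 a5 a7 K 1) as Hc.
  assert (Hc' : continuity_pt (fun s => sum_n (blk a1 a3 a5 a7 s) K) 1) by (apply continuity_pt_filterlim; exact Hc).
  destruct (Hc' (eps / 3) ltac:(lra)) as [d [Hdp Hd]].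
  exists (Rmin d 1). split; [apply Rmin_pos; lra|].
  intros s Hs.
  assert (Hd' : Rabs (sum_n (blk a1 a3 a5 a7 s) K - sum_n (blk a1 a3 a5 a7 1) K) < eps / 3).
  { apply (Hd s). split; [split; [exact I|lra]|]. unfold R_dist. pose proof (Rmin_l d 1). apply Rabs_def1; simpl; lra. }
  assert (Hs2 : 1 <= s <= 2) by (pose proof (Rmin_r d 1); lra).
  pose proof (tail_bound (blk a1 a3 a5 a7 s) Bb K (fun k => blk_bound a1 a3 a5 a7 s k Hs2 Hsum H3 H5 H7) ex_series_Bb) as T1.
  pose proof (tail_bound (blk a1 a3 a5 a7 1) Bb K (fun k => blk_bound a1 a3 a5 a7 1 k ltac:(lra) Hsum H3 H5 H7) ex_series_Bb) as T2.
  apply abs_le_b in T1. apply abs_le_b in T2. apply Rabs_def2 in Hd'. rewrite Rabs_pos_eq in HK.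
  2:{ pose proof (tail_bound (fun _ => 0) Bb K). 
      assert (H0 : forall k, Rabs ((fun _ : nat => 0) k) <= Bb k).
      { intros k. rewrite Rabs_R0. unfold Bb. pose proof (gz_nonneg 2 (S k)). lra. }
      specialize (H H0 ex_series_Bb). pose proof (Rabs_pos (Series (fun _ : nat => 0) - sum_n (fun _ : nat => 0) K)). lra. }
  apply Rabs_def1; lra.
Qed.

Ltac toR := match goal with |- ?a = ?b => change (@eq R a b) end.

Definition Pp (a1 a3 a5 a7 x : R) := a1 + a3 * x ^ 2 + a5 * x ^ 4 + a7 * x ^ 6.

Definition mon (m : nat) (x : R) := x ^ (S m) / INR (S m).

Definition qterm (a1 a3 a5 a7 x : R) (k : nat) :=
  a1 * mon (8 * k) x + a3 * mon (8 * k + 2) x + a5 * mon (8 * k + 4) x + a7 * mon (8 * k + 6) x.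

Definition dterm' (a1 a3 a5 a7 x : R) (k : nat) :=
  a1 * x ^ (8 * k) + a3 * x ^ (8 * k + 2) + a5 * x ^ (8 * k + 4) + a7 * x ^ (8 * k + 6).

Lemma qterm_der a1 a3 a5 a7 k x : is_derive (fun y => qterm a1 a3 a5 a7 y k) x (dterm' a1 a3 a5 a7 x k).
Proof.
  unfold qterm, dterm'.
  apply (is_derive_plus (K:=R_AbsRing) (V:=R_NormedModule)); [apply (is_derive_plus (K:=R_AbsRing) (V:=R_NormedModule)); [apply (is_derive_plus (K:=R_AbsRing) (V:=R_NormedModule))|]|];
  apply is_derive_scal; apply is_derive_mon.
Qed.

Lemma Q_der a1 a3 a5 a7 K x : is_derive (fun y => sum_n (qterm a1 a3 a5 a7 y) K) x (sum_n (dterm' a1 a3 a5 a7 x) K).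
Proof.
  induction K.
  - rewrite sum_O. apply (is_derive_ext (fun y => qterm a1 a3 a5 a7 y 0)); [intros t; symmetry; apply sum_O|]. apply qterm_der.
  - rewrite sum_Sn. apply (is_derive_ext (fun y => plus (sum_n (qterm a1 a3 a5 a7 y) K) (qterm a1 a3 a5 a7 y (S K)))); [intros t; symmetry; apply sum_Sn|].
    apply (is_derive_plus (K:=R_AbsRing) (V:=R_NormedModule)); [exact IHK|apply qterm_der].
Qed.

Lemma dQ_eq a1 a3 a5 a7 (Rx x : R) K : Rx * (1 - x ^ 8) = Pp a1 a3 a5 a7 x ->
  sum_n (dterm' a1 a3 a5 a7 x) K = Rx * (1 - x ^ (8 * K + 8)).
Proof.
  intros H. induction K.
  - rewrite sum_O. unfold dterm'. toR. simpl Nat.mul. simpl Nat.add. rewrite H. unfold Pp. simpl. ring.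
  - rewrite sum_Sn, plus_R. toR. rewrite IHK. unfold dterm'.
    replace (8 * S K)%nat with (8 * K + 8)%nat by lia.
    replace (8 * S K + 8)%nat with (8 * K + 8 + 8)%nat by lia.
    rewrite !pow_add. replace (Rx * (1 - x ^ (8 * K) * x ^ 8 * x ^ 8)) with
      (Rx * (1 - x ^ (8 * K) * x ^ 8) + x ^ (8 * K) * x ^ 8 * (Rx * (1 - x ^ 8))) by ring.
    rewrite H. unfold Pp. ring.
Qed.

Lemma incr01 (H dH : R -> R) : (forall x, is_derive H x (dH x)) -> (forall x, 0 <= x <= 1 -> 0 <= dH x) -> H 0 <= H 1.
Proof.
  intros Hd Hp. destruct (MVT_gen H 0 1 dH) as [c [Hc E]].
  - intros x _. apply Hd.
  - intros x _. apply continuity_pt_filterlim. apply (ex_derive_continuous (K:=R_AbsRing) (V:=R_NormedModule)).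
    exists (dH x). apply Hd.
  - rewrite Rmin_left, Rmax_right in Hc by lra. specialize (Hp c Hc). nra.
Qed.

Lemma sum_qterm1 a1 a3 a5 a7 K : sum_n (qterm a1 a3 a5 a7 1) K = sum_n (blk a1 a3 a5 a7 1) K.
Proof.
  apply sum_n_ext. intros k. unfold qterm, blk, mon. rewrite !pow1.
  rewrite !Rpower_Ropp, !Rpower_1 by (apply lt_0_INR; lia).
  replace (S (8 * k)) with (8 * k + 1)%nat by lia.
  replace (S (8 * k + 2)) with (8 * k + 3)%nat by lia.
  replace (S (8 * k + 4)) with (8 * k + 5)%nat by lia.
  replace (S (8 * k + 6)) with (8 * k + 7)%nat by lia. unfold Rdiv. toR. ring.
Qed.

Lemma sum_qterm0 a1 a3 a5 a7 K : sum_n (qterm a1 a3 a5 a7 0) K = 0.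
Proof.
  rewrite (sum_n_ext _ (fun _ => 0)).
  - rewrite sum_n_const. toR. ring.
  - intros k. unfold qterm, mon. simpl pow. unfold Rdiv. toR. ring.
Qed.

Lemma Lval_gen a1 a3 a5 a7 (Rf A : R -> R) :
  (forall x, is_derive A x (Rf x)) -> (forall x, Rf x * (1 - x ^ 8) = Pp a1 a3 a5 a7 x) ->
  (forall x, 0 <= x <= 1 -> Rabs (Rf x) <= 2) ->
  is_series (blk a1 a3 a5 a7 1) (A 1 - A 0).
Proof.
  intros HA HR Hb.
  assert (Hbound : forall K, Rabs (sum_n (blk a1 a3 a5 a7 1) K - (A 1 - A 0)) <= 2 / INR (S (8 * K + 8))).
  { intros K.
    set (D := fun x => sum_n (qterm a1 a3 a5 a7 x) K - A x).
    assert (HD : forall x, is_derive D x (Rf x * (1 - x ^ (8 * K + 8)) - Rf x)).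
    { intros x. rewrite <- (dQ_eq a1 a3 a5 a7 (Rf x) x K (HR x)).
      apply (is_derive_minus (K:=R_AbsRing) (V:=R_NormedModule) (fun y => sum_n (qterm a1 a3 a5 a7 y) K) A); [apply Q_der|apply HA]. }
    assert (H1 := incr01 (fun x => D x + 2 * mon (8 * K + 8) x)
                         (fun x => (Rf x * (1 - x ^ (8 * K + 8)) - Rf x) + 2 * x ^ (8 * K + 8))).
    assert (H2 := incr01 (fun x => - D x + 2 * mon (8 * K + 8) x)
                         (fun x => - (Rf x * (1 - x ^ (8 * K + 8)) - Rf x) + 2 * x ^ (8 * K + 8))).
    assert (E1 : D 1 = sum_n (blk a1 a3 a5 a7 1) K - A 1) by (unfold D; rewrite sum_qterm1; reflexivity).
    assert (E0 : D 0 = - A 0) by (unfold D; rewrite sum_qterm0; ring).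
    assert (M1 : mon (8 * K + 8) 1 = 2 / INR (S (8 * K + 8)) / 2) by (unfold mon; rewrite pow1; field; apply not_0_INR; lia).
    assert (M0 : mon (8 * K + 8) 0 = 0) by (unfold mon; simpl pow; unfold Rdiv; ring).
    cbv beta in H1, H2. rewrite M1, M0, E1, E0 in H1, H2.
    assert (Hp : forall x, 0 <= x <= 1 -> 0 <= x ^ (8 * K + 8)) by (intros; apply pow_le; lra).
    lapply H1; [intros H1'|].
    2:{ intros x. apply (is_derive_plus (K:=R_AbsRing) (V:=R_NormedModule)); [apply HD|]. apply is_derive_scal, is_derive_mon. }
    lapply H2; [intros H2'|].
    2:{ intros x. apply (is_derive_plus (K:=R_AbsRing) (V:=R_NormedModule)).
        apply (is_derive_opp (K:=R_AbsRing) (V:=R_NormedModule)); apply HD. apply is_derive_scal, is_derive_mon. }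
    assert (A1 : 0 <= 2 / INR (S (8 * K + 8))) by (apply Rdiv_le_0_compat; [lra|apply lt_0_INR; lia]).
    assert (H1'' : 0 + 0 <= sum_n (blk a1 a3 a5 a7 1) K - A 1 + 2 * (2 / INR (S (8 * K + 8)) / 2) + A 0).
    { specialize (H1' ltac:(intros x Hx; specialize (Hb x Hx); specialize (Hp x Hx); apply abs_le_b in Hb;
        replace (Rf x * (1 - x ^ (8 * K + 8)) - Rf x + 2 * x ^ (8 * K + 8)) with (x ^ (8 * K + 8) * (2 - Rf x)) by ring;
        apply Rmult_le_pos; lra)). lra. }
    assert (H2'' : 0 <= - (sum_n (blk a1 a3 a5 a7 1) K - A 1) + 2 * (2 / INR (S (8 * K + 8)) / 2) - A 0).
    { specialize (H2' ltac:(intros x Hx; specialize (Hb x Hx); specialize (Hp x Hx); apply abs_le_b in Hb;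
        replace (- (Rf x * (1 - x ^ (8 * K + 8)) - Rf x) + 2 * x ^ (8 * K + 8)) with (x ^ (8 * K + 8) * (2 + Rf x)) by ring;
        apply Rmult_le_pos; lra)). lra. }
    apply Rabs_le. split; lra. }
  change (is_lim_seq (sum_n (blk a1 a3 a5 a7 1)) (A 1 - A 0)).
  apply is_lim_seq_spec. intros eps.
  destruct (nat_unbounded (2 / eps)) as [N HN]. exists N. intros K HK.
  eapply Rle_lt_trans; [apply Hbound|].
  assert (INR N <= INR (S (8 * K + 8))) by (apply le_INR; lia).
  pose proof (cond_pos eps).
  assert (0 < INR N) by (pose proof (Rdiv_lt_0_compat 2 eps ltac:(lra) H0); lra).
  apply Rmult_lt_reg_r with (INR (S (8 * K + 8))); [lra|].
  unfold Rdiv. rewrite Rmult_assoc, Rinv_l by lra.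
  apply Rmult_lt_compat_r with (r := eps) in HN; [|lra].
  unfold Rdiv in HN. rewrite Rmult_assoc, Rinv_l in HN by lra. nra.
Qed.

Lemma r2 : sqrt 2 * sqrt 2 = 2.
Proof. apply sqrt_sqrt. lra. Qed.
Lemma rpos : 0 < sqrt 2.
Proof. apply Rlt_sqrt2_0. Qed.
Lemma rlt2 : sqrt 2 < 2.
Proof. pose proof r2. pose proof rpos. nra. Qed.
Lemma rgt1 : 1 < sqrt 2.
Proof. pose proof r2. pose proof rpos. nra. Qed.

Lemma qpos x : 0 < x ^ 2 + sqrt 2 * x + 1.
Proof. pose proof r2. nra. Qed.
Lemma qneg x : 0 < x ^ 2 - sqrt 2 * x + 1.
Proof. pose proof r2. nra. Qed.
Lemma qprod x : (x ^ 2 + sqrt 2 * x + 1) * (x ^ 2 - sqrt 2 * x + 1) = 1 + x ^ 4.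
Proof. pose proof r2. replace (1 + x ^ 4) with (x^4 + 2 * x^2 + 1 - (sqrt 2 * sqrt 2) * x ^ 2) by (rewrite r2; ring). ring. Qed.

Lemma val4 : is_series (blk 1 (-1) 1 (-1) 1) (PI / 4).
Proof.
  replace (PI / 4) with (atan 1 - atan 0) by (rewrite atan_1, atan_0; ring).
  apply (Lval_gen _ _ _ _ (fun x => / (1 + x ^ 2))).
  - intros x. auto_derive; auto. field. nra.
  - intros x. unfold Pp. field. nra.
  - intros x Hx. rewrite Rabs_pos_eq by (left; apply Rinv_0_lt_compat; nra).
    assert (1 <= 1 + x ^ 2) by nra. 
    apply Rle_trans with 1; [|lra]. rewrite <- Rinv_1. apply Rinv_le_contravar; lra.
Qed.

Lemma valm8 : is_series (blk 1 1 (-1) (-1) 1) (PI / (2 * sqrt 2)).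
Proof.
  pose proof r2 as R2. pose proof rpos as Rp.
  set (A := fun x => (atan (sqrt 2 * x + 1) + atan (sqrt 2 * x - 1)) / sqrt 2).
  replace (PI / (2 * sqrt 2)) with (A 1 - A 0).
  2:{ unfold A. rewrite !Rmult_1_r, Rmult_0_r, Rplus_0_l.
      replace (0 - 1) with (Ropp 1) by ring. rewrite atan_opp.
      replace (sqrt 2 - 1) with (/ (sqrt 2 + 1)).
      2:{ field_simplify_eq; [|lra]. nra. }
      rewrite atan_inv by lra. field. lra. }
  apply (Lval_gen _ _ _ _ (fun x => (1 + x ^ 2) / (1 + x ^ 4)) A).
  - intros x. unfold A. auto_derive; auto.
    assert (E1 : 1 + (sqrt 2 * x + 1) * ((sqrt 2 * x + 1) * 1) = 2 * (x ^ 2 + sqrt 2 * x + 1)).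
    { replace (2 * (x ^ 2 + sqrt 2 * x + 1)) with ((sqrt 2 * sqrt 2) * x ^ 2 + 2 * sqrt 2 * x + 2) by (rewrite R2; ring). ring. }
    assert (E2 : 1 + (sqrt 2 * x + - (1)) * ((sqrt 2 * x + - (1)) * 1) = 2 * (x ^ 2 - sqrt 2 * x + 1)).
    { replace (2 * (x ^ 2 - sqrt 2 * x + 1)) with ((sqrt 2 * sqrt 2) * x ^ 2 - 2 * sqrt 2 * x + 2) by (rewrite R2; ring). ring. }
    rewrite E1, E2, <- qprod. pose proof (qpos x). pose proof (qneg x). field. repeat split; lra.
  - intros x. unfold Pp. field. nra.
  - intros x Hx. assert (0 < 1 + x ^ 4) by nra.
    rewrite Rabs_pos_eq by (apply Rdiv_le_0_compat; nra).
    apply Rmult_le_reg_r with (1 + x ^ 4); [lra|]. unfold Rdiv. rewrite Rmult_assoc, Rinv_l by lra. nra.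
Qed.

Lemma val8 : is_series (blk 1 (-1) (-1) 1 1) (ln (1 + sqrt 2) / sqrt 2).
Proof.
  pose proof r2 as R2. pose proof rpos as Rp. pose proof rlt2.
  set (A := fun x => (ln (x ^ 2 + sqrt 2 * x + 1) - ln (x ^ 2 - sqrt 2 * x + 1)) / (2 * sqrt 2)).
  replace (ln (1 + sqrt 2) / sqrt 2) with (A 1 - A 0).
  2:{ unfold A. 
      replace (1 ^ 2 + sqrt 2 * 1 + 1) with ((1 + sqrt 2) ^ 2 * (1 ^ 2 - sqrt 2 * 1 + 1)) by
        (replace ((1 + sqrt 2) ^ 2 * (1 ^ 2 - sqrt 2 * 1 + 1)) with (2 + 3 * sqrt 2 - sqrt 2 * (sqrt 2 * sqrt 2)) by ring; rewrite R2; ring).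
      replace (0 ^ 2 + sqrt 2 * 0 + 1) with 1 by ring. replace (0 ^ 2 - sqrt 2 * 0 + 1) with 1 by ring.
      rewrite ln_mult, ln_pow by (try apply pow_lt; nra). rewrite ln_1. simpl INR. field. lra. }
  apply (Lval_gen _ _ _ _ (fun x => (1 - x ^ 2) / (1 + x ^ 4)) A).
  - intros x. unfold A. pose proof (qpos x). pose proof (qneg x).
    auto_derive; [repeat split; simpl; lra|].
    rewrite <- qprod. simpl. field. repeat split; simpl in *; lra.
  - intros x. unfold Pp. field. nra.
  - intros x Hx. assert (0 < 1 + x ^ 4) by nra.
    apply Rabs_le. split; apply Rmult_le_reg_r with (1 + x ^ 4); try lra; unfold Rdiv;
      rewrite Rmult_assoc, Rinv_l by lra; nra.
Qed.

Lemma lim_mult {T} {F : (T -> Prop) -> Prop} {FF : Filter F} (f g : T -> R) a b :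
  filterlim f F (locally a) -> filterlim g F (locally b) -> filterlim (fun x => f x * g x) F (locally (a * b)).
Proof.
  intros Hf Hg. eapply filterlim_comp_2; [exact Hf|exact Hg|]. apply (filterlim_mult (K:=R_AbsRing) a b).
Qed.

Lemma lim_inv {T} {F : (T -> Prop) -> Prop} {FF : Filter F} (f : T -> R) a :
  filterlim f F (locally a) -> a <> 0 -> filterlim (fun x => / f x) F (locally (/ a)).
Proof.
  intros Hf Ha. eapply filterlim_comp; [exact Hf|].
  apply (filterlim_Rbar_inv (Finite a)). intros E; injection E; auto.
Qed.

Lemma prod_p5_ext f g N : (forall p, prime5mod8 p = true -> f p = g p) -> prod_p5 f N = prod_p5 g N.
Proof. intros H. induction N; simpl; auto. rewrite IHN. destruct prime5mod8 eqn:E; auto. rewrite H; auto. Qed.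

Lemma p5_ge2 p : prime5mod8 p = true -> (2 <= p)%nat.
Proof. unfold prime5mod8. destruct prime_dec as [H|]; [|discriminate]. intros _. apply prime_gt1; auto. Qed.

Lemma const_g2 N : prod_p5 const_factor N = prod_p5 (g2 1) N.
Proof.
  apply prod_p5_ext. intros p Hp. apply p5_ge2 in Hp. unfold const_factor, g2.
  rewrite Rmult_1_r, Rpower_Ropp. replace 2 with (INR 2) at 1 by reflexivity.
  rewrite Rpower_pow by (apply lt_0_INR; lia). reflexivity.
Qed.

Lemma g2_mono s p : 1 <= s -> prime5mod8 p = true -> 1 <= g2 s p <= g2 1 p.
Proof.
  intros Hs Hp. apply p5_ge2 in Hp. unfold g2. fold (xp (2 * s) p). fold (xp (2 * 1) p).
  pose proof (xp_bounds (2 * s) p ltac:(lra) Hp). pose proof (xp_bounds (2 * 1) p ltac:(lra) Hp).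
  assert (xp (2 * s) p <= xp (2 * 1) p).
  { unfold xp. apply Rle_Rpower; [apply (le_INR 1); lia|lra]. }
  rewrite <- !pow_inv. split.
  - apply pow_R1_Rle. apply inv1m_ge1. lra.
  - apply pow_incr. split; [left; apply Rinv_0_lt_compat; lra|].
    apply Rinv_le_contravar; lra.
Qed.

Lemma prod_p5_nonneg f N : (forall p, prime5mod8 p = true -> 0 <= f p) -> 0 <= prod_p5 f N.
Proof.
  intros H. induction N; simpl; [lra|]. destruct (prime5mod8 N) eqn:E; [|lra].
  apply Rmult_le_pos; auto.
Qed.

Lemma prod_p5_le f g N : (forall p, prime5mod8 p = true -> 0 <= f p <= g p) -> prod_p5 f N <= prod_p5 g N.
Proof.
  intros H. induction N; simpl; [lra|]. destruct prime5mod8 eqn:E; [|lra].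
  assert (0 <= prod_p5 f N) by (apply prod_p5_nonneg; intros; apply H; auto).
  apply Rmult_le_compat; auto; apply H; auto.
Qed.

Lemma prod_p5_cont N : continuous (fun s => prod_p5 (g2 s) N) 1.
Proof.
  apply (ex_derive_continuous (K:=R_AbsRing) (V:=R_NormedModule)).
  induction N.
  - simpl. apply ex_derive_const.
  - simpl. destruct prime5mod8 eqn:E.
    + apply ex_derive_mult; [exact IHN|].
      apply p5_ge2 in E. pose proof (xp_bounds (2 * 1) N ltac:(lra) E) as Hx.
      unfold xp, Rpower in Hx. unfold g2, Rpower. auto_derive.
      apply Rmult_integral_contrapositive. split; [lra|]. rewrite Rmult_1_r. lra.
    + apply ex_derive_mult; [exact IHN|]. apply ex_derive_const.
Qed.

Lemma p5_iff p : prime5mod8 p = true <-> isp p = true /\ Nat.eqb (p mod 8) 5 = true.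
Proof. unfold prime5mod8, isp. destruct prime_dec; split; intros H; try tauto; try discriminate; destruct H; discriminate. Qed.

Lemma P2_cont : filterlim P2 (at_right 1) (locally (P2 1)).
Proof.
  apply lim_right_eps. intros eps He.
  pose proof (P2_lim 1 ltac:(lra)) as HL. apply is_lim_seq_spec in HL.
  destruct (HL (mkposreal (eps / 2) ltac:(lra))) as [N HN]. specialize (HN N (le_n N)). cbn [pos] in HN.
  assert (Hc : continuity_pt (fun s => prod_p5 (g2 s) N) 1) by (apply continuity_pt_filterlim; apply prod_p5_cont).
  destruct (Hc (eps / 2) ltac:(lra)) as [d [Hdp Hd]].
  exists d. split; [lra|]. intros s Hs.
  assert (H1 : Rabs (prod_p5 (g2 s) N - prod_p5 (g2 1) N) < eps / 2).
  { apply (Hd s). split; [split; [exact I|lra]|]. unfold R_dist. apply Rabs_def1; lra. }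
  assert (H2 : P2 s <= P2 1).
  { assert (Hle := is_lim_seq_le _ _ _ _ (fun n => prod_p5_le (g2 s) (g2 1) n
       (fun p Hp => let H := g2_mono s p ltac:(lra) Hp in conj (Rle_trans _ _ _ Rle_0_1 (proj1 H)) (proj2 H)))
       (P2_lim s ltac:(lra)) (P2_lim 1 ltac:(lra))).
    exact Hle. }
  assert (H3 : prod_p5 (g2 s) N <= P2 s).
  { apply (is_lim_seq_incr_compare _ _ (P2_lim s ltac:(lra))). intros n. apply prod_p5_incr.
    intros p Hp E. apply (g2_mono s p ltac:(lra)). apply p5_iff; auto. }
  apply Rabs_def2 in H1. apply Rabs_def2 in HN. apply Rabs_def1; lra.
Qed.

Lemma abs_m1 : Rabs (-1) <= 1.
Proof. unfold Rabs; destruct Rcase_abs; lra. Qed.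
Lemma abs_1 : Rabs 1 <= 1.
Proof. rewrite Rabs_R1; lra. Qed.

Lemma Lim_chi a1 a3 a5 a7 V : a1 + a3 + a5 + a7 = 0 ->
  Rabs a1 <= 1 -> Rabs a3 <= 1 -> Rabs a5 <= 1 -> Rabs a7 <= 1 ->
  is_series (blk a1 a3 a5 a7 1) V ->
  filterlim (fun s => Lser (chi a1 a3 a5 a7) s) (at_right 1) (locally V).
Proof.
  intros Hs H1 H3 H5 H7 HV.
  assert (HL : filterlim (fun s => Series (blk a1 a3 a5 a7 s)) (at_right 1) (locally V)).
  { rewrite <- (is_series_unique _ _ HV). apply Lcont; auto. }
  refine (filterlim_ext_loc _ _ _ HL). exists (mkposreal 1 Rlt_0_1). intros y _ Hy. apply is_series_unique. apply Lser_blk; auto. Qed.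


Lemma Lim4 : filterlim (fun s => Lser c4 s) (at_right 1) (locally (PI / 4)).
Proof. apply Lim_chi; try apply abs_1; try apply abs_m1; [ring|apply val4]. Qed.
Lemma Lim8 : filterlim (fun s => Lser c8 s) (at_right 1) (locally (ln (1 + sqrt 2) / sqrt 2)).
Proof. apply Lim_chi; try apply abs_1; try apply abs_m1; [ring|apply val8]. Qed.
Lemma Limm8 : filterlim (fun s => Lser cm8 s) (at_right 1) (locally (PI / (2 * sqrt 2))).
Proof. apply Lim_chi; try apply abs_1; try apply abs_m1; [ring|apply valm8]. Qed.

Lemma ln1r : 0 < ln (1 + sqrt 2).
Proof. rewrite <- ln_1. apply ln_increasing; [lra|]. pose proof rpos. lra. Qed.

Theorem mainTheorem5 :
  exists (F : R -> R) (C : R),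
    (forall s : R, 1 < s ->
       is_lim_seq (fun N => prod_p5 (euler_factor s) N) (F s)) /\
    is_lim_seq (fun N => prod_p5 const_factor N) C /\
    filterlim (fun s => (s - 1) * F s) (at_right 1)
      (locally (/ (2 * ln (1 + sqrt 2)) * C)).
Proof.
  exists Fs, (P2 1). split; [|split].
  - intros s Hs. apply Fs_lim; auto.
  - eapply is_lim_seq_ext; [intros N; symmetry; apply const_g2|]. apply P2_lim; lra.
  - pose proof r2 as R2. pose proof rpos as Rp. pose proof ln1r as Hln. pose proof PI_RGT_0 as Hpi.
    set (D1 := ln (1 + sqrt 2) / sqrt 2 * (PI / (2 * sqrt 2))).
    assert (HD1 : 0 < D1) by (unfold D1; apply Rmult_lt_0_compat; apply Rdiv_lt_0_compat; lra).
    assert (HD := lim_mult _ _ _ _ Lim8 Limm8). fold D1 in HD.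
    assert (HN := lim_mult _ _ _ _ (lim_mult _ _ _ _ L0_residue Lim4) P2_cont).
    assert (Hall := lim_mult _ _ _ _ HN (lim_inv _ _ HD ltac:(lra))).
    replace (/ (2 * ln (1 + sqrt 2)) * P2 1) with (1 / 2 * (PI / 4) * P2 1 * / D1).
    2:{ unfold D1. replace (ln (1 + sqrt 2) / sqrt 2 * (PI / (2 * sqrt 2))) with
          (ln (1 + sqrt 2) * PI / (2 * (sqrt 2 * sqrt 2))) by (field; lra).
        rewrite R2. field. lra. }
    refine (filterlim_ext_loc _ _ _ Hall).
    assert (Hev := proj1 (filterlim_locally _ _) HD (mkposreal (D1 / 2) ltac:(lra))).
    assert (Hgt : at_right 1 (fun s => 1 < s)) by (exists (mkposreal 1 Rlt_0_1); intros; auto).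
    apply (filter_imp (fun s => 1 < s /\ ball D1 (D1 / 2) (Lser c8 s * Lser cm8 s))).
    + intros s [Hs Hb]. change (Rabs (Lser c8 s * Lser cm8 s - D1) < D1 / 2) in Hb.
      apply Rabs_def2 in Hb.
      pose proof (main_identity s Hs) as E.
      assert (Hne : Lser c8 s * Lser cm8 s <> 0) by lra.
      apply (Rmult_eq_reg_r (Lser c8 s * Lser cm8 s)); [|exact Hne].
      rewrite (Rmult_assoc (s - 1) (Fs s)), E. field. split; intros Hc; apply Hne; rewrite Hc; ring.
    + apply filter_and; auto.
Qed.
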